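(* For every single-qubit density operator $\rho$ and every single-qubit Clifford unitary $U$ (a $2\times 2$ unitary normalizing the single-qubit Pauli group), $C(U\rho U^\dagger)=C(\rho)$, where $C$ is computed with $n=1$.
   Context: Let $I,X,Y,Z$ be the Pauli matrices. For $(q,p)\in\mathbb{F}_2^2$ define the single-qubit phase-point operator $A_{(q,p)}=\tfrac12\bigl(I+(-1)^pX+(-1)^{q+p}Y+(-1)^qZ\bigr)$. For $n$ qubits and $\alpha=(\alpha_1,\dots,\alpha_n)\in(\mathbb{F}_2^2)^n$ set $A_\alpha=A_{\alpha_1}\otimes\cdots\otimes A_{\alpha_n}$. The discrete Wigner function of an $n$-qubit operator $\rho$ is $W_\rho(\alpha)=2^{-n}\mathrm{Tr}(\rho A_\alpha)$, regarded as a vector in $\mathbb{R}^{4^n}$. $\mathrm{Stab}_n$ denotes the set of pure $n$-qubit stabilizer states, i.e. density operators $|\psi\rangle\langle\psi|$ with $|\psi\rangle$ the unique common $+1$ eigenvector of an abelian subgroup of the $n$-qubit Pauli group of size $2^n$ (not containing $-I$). The free Wigner polytope is $\mathcal{W}_{\mathrm{free}}=\mathrm{conv}\{W_\sigma:\sigma\in\mathrm{Stab}_n\}$, and the Wigner distance is $C(\rho)=\min_{f\in\mathcal{W}_{\mathrm{free}}}\|W_\rho-f\|_1$. *)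

(* Defs.v *)
From HB Require Import structures.
From mathcomp Require Import all_boot all_order all_algebra.
From mathcomp Require Import complex.
From mathcomp Require Import classical_sets reals.
Set Implicit Arguments. Unset Strict Implicit. Unset Printing Implicit Defensive.
Import Order.TTheory GRing.Theory Num.Theory.
Local Open Scope ring_scope.

Notation Cx R := (R[i]).
Definition iC {R : realType} : R[i] := Complex 0 1.

Definition dagger {R : realType} {m n : nat} (A : 'M[R[i]]_(m, n)) : 'M[R[i]]_(n, m) :=
  (map_mx (@conjc R) A)^T.

Definition PI {R : realType} : 'M[R[i]]_2 := 1%:M.
Definition PX {R : realType} : 'M[R[i]]_2 :=
  \matrix_(i < 2, j < 2) (if i == j then 0 else 1).
Definition PY {R : realType} : 'M[R[i]]_2 :=
  \matrix_(i < 2, j < 2)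
    (if i == j then 0 else if (i == 0 :> nat) then - iC else iC).
Definition PZ {R : realType} : 'M[R[i]]_2 :=
  \matrix_(i < 2, j < 2) (if i == j then (if (i == 0 :> nat) then 1 else -1) else 0).

Definition pauli_group {R : realType} (P : 'M[R[i]]_2) : Prop :=
  exists (k : 'I_4) (Q : 'M[R[i]]_2),
    (Q = PI \/ Q = PX \/ Q = PY \/ Q = PZ) /\ P = (iC ^+ k) *: Q.

Definition clifford1 {R : realType} (U : 'M[R[i]]_2) : Prop :=
  U *m dagger U = 1%:M /\ dagger U *m U = 1%:M /\
  forall P, pauli_group P -> pauli_group (U *m P *m dagger U).

Definition density1 {R : realType} (rho : 'M[R[i]]_2) : Prop :=
  dagger rho = rho /\
  (forall v : 'cV[R[i]]_2, 0 <= (dagger v *m rho *m v) 0 0) /\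
  \tr rho = 1.

Definition stab1 {R : realType} (sigma : 'M[R[i]]_2) : Prop :=
  exists (S : seq 'M[R[i]]_2) (psi : 'cV[R[i]]_2),
    [/\ [/\ uniq S, size S = 2%N & forall P, P \in S -> pauli_group P],
        (1%:M \in S) /\ (forall P Q, P \in S -> Q \in S -> P *m Q \in S),
        (forall P Q, P \in S -> Q \in S -> P *m Q = Q *m P),
        (- 1%:M) \notin S &
     [/\ dagger psi *m psi = 1%:M,
         (forall P, P \in S -> P *m psi = psi),
         (forall phi : 'cV[R[i]]_2, (forall P, P \in S -> P *m phi = phi) ->
              exists c : R[i], phi = c *: psi) &
         sigma = psi *m dagger psi]].

Definition sgnb {R : realType} (b : bool) : R[i] := if b then -1 else 1.
Definition phase_point {R : realType} (q p : bool) : 'M[R[i]]_2 :=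
  (1 / 2 : R[i]) *: (PI + sgnb p *: PX + sgnb (addb q p) *: PY + sgnb q *: PZ).

Definition wigner1 {R : realType} (rho : 'M[R[i]]_2) (a : bool * bool) : R :=
  complex.Re ((1 / 2 : R[i]) * \tr (rho *m phase_point a.1 a.2)).

Definition free_wigner1 {R : realType} (f : bool * bool -> R) : Prop :=
  exists (s : seq (R * 'M[R[i]]_2)),
    [/\ (forall x, x \in s -> 0 <= x.1 /\ stab1 x.2),
        \sum_(x <- s) x.1 = 1 &
        forall a, f a = \sum_(x <- s) x.1 * wigner1 x.2 a].

Definition l1dist {R : realType} (f g : bool * bool -> R) : R :=
  \sum_(a : bool * bool) `|f a - g a|.

(** Wigner distance C(rho) (the minimum is attained; we take the infimum). *)
Definition wigner_distance1 {R : realType} (rho : 'M[R[i]]_2) : R :=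
  reals.inf [set d : R | exists f, free_wigner1 f /\ d = l1dist (wigner1 rho) f].

(* Main.v *)
Require Import Defs.
From HB Require Import structures.
From mathcomp Require Import all_boot all_order all_algebra.
From mathcomp Require Import complex.
From mathcomp Require Import classical_sets reals.
From mathcomp Require Import ring lra.
Import GRing.Theory Num.Theory.
Local Open Scope ring_scope.

Section S.
Variable R : realType.
Local Notation Re := (@complex.Re R).
Local Notation Im := (@complex.Im R).
Implicit Types (M A B U : 'M[R[i]]_2).

Lemma ReD (x y : R[i]) : Re (x + y) = Re x + Re y.
Proof. by case: x => a b; case: y => c d. Qed.
Lemma ReN (x : R[i]) : Re (- x) = - Re x.
Proof. by case: x => a b. Qed.
Lemma ImN (x : R[i]) : Im (- x) = - Im x.
Proof. by case: x => a b. Qed.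
Lemma Re1 : Re (1 : R[i]) = 1. Proof. by []. Qed.
Lemma Im1 : Im (1 : R[i]) = 0. Proof. by []. Qed.
Lemma Re0 : Re (0 : R[i]) = 0. Proof. by []. Qed.
Lemma Im0 : Im (0 : R[i]) = 0. Proof. by []. Qed.
Lemma iC2 : (iC : R[i]) * iC = -1.
Proof. by rewrite -expr2 sqr_i. Qed.

Definition dg (A : 'M[R[i]]_2) := dagger A.

Lemma dagger_mul m n p (A : 'M[R[i]]_(m,n)) (B : 'M[R[i]]_(n,p)) :
  dagger (A *m B) = dagger B *m dagger A.
Proof. by rewrite /dagger (map_mxM (@conjc R : {rmorphism _ -> _})) trmx_mul. Qed.

Lemma daggerK m n (A : 'M[R[i]]_(m,n)) : dagger (dagger A) = A.
Proof. by apply/matrixP => i j; rewrite !mxE conjcK. Qed.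

Definition pau (j : 'I_3) : 'M[R[i]]_2 :=
  if val j == 0%N then PX else if val j == 1%N then PY else PZ.
Definition sgr (b:bool) : R := if b then -1 else 1.
Definition cc : R[i] := (1/2) * (1/2).
Definition g (z : R[i]) : R := Re (cc * z).
Definition cf (P M : 'M[R[i]]_2) : R := g (\tr (M *m P)).
Definition lin (t x y z : R) (q p : bool) :=
  t + sgr p * x + sgr (addb q p) * y + sgr q * z.

Lemma gD a b : g (a + b) = g a + g b.
Proof. by rewrite /g mulrDr ReD. Qed.
Lemma gS b z : g (sgnb b * z) = sgr b * g z.
Proof. by case: b => /=; rewrite /g ?mulN1r ?mulrN ?ReN ?mul1r. Qed.

Lemma wigner_c M q p : wigner1 M (q,p) =
  lin (cf PI M) (cf (pau 0) M) (cf (pau 1) M) (cf (pau 2) M) q p.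
Proof.
rewrite /wigner1 /phase_point /= -scalemxAr mxtraceZ mulrA -/cc.
rewrite !mulmxDr !mxtraceD -!scalemxAr !mxtraceZ -/(g _) !gD !gS.
by rewrite /lin /cf /pau /=.
Qed.
Definition N (a b c : R) := `|a+b+c| + `|a+b-c| + `|a-b+c| + `|a-b-c|.
Lemma Nsum x y z : \sum_(a : bool*bool) `|lin 0 x y z a.1 a.2| = N x y z.
Proof.
transitivity (\sum_(q : bool) \sum_(p : bool) `|lin 0 x y z q p|).
  by rewrite pair_big; apply: eq_bigr => -[q p].
rewrite !big_bool /=.
rewrite /lin /sgr /=.
have -> : 0 + -1 * x + 1 * y + -1 * z = - (x - y + z) by ring.
have -> : 0 + 1 * x + -1 * y + -1 * z = x - y - z by ring.
have -> : 0 + -1 * x + -1 * y + 1 * z = - (x + y - z) by ring.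
have -> : 0 + 1 * x + 1 * y + 1 * z = x + y + z by ring.
rewrite !normrN /N; ring.
Qed.

Lemma NN1 a b c : N (- a) b c = N a b c.
Proof.
rewrite /N.
have -> : - a + b + c = - (a - b - c) by ring.
have -> : - a + b - c = - (a - b + c) by ring.
have -> : - a - b + c = - (a + b - c) by ring.
have -> : - a - b - c = - (a + b + c) by ring.
rewrite !normrN; ring.
Qed.
Lemma NC12 a b c : N a b c = N b a c.
Proof.
rewrite /N.
have -> : a - b + c = - (b - a - c) by ring.
have -> : a - b - c = - (b - a + c) by ring.
rewrite !normrN (addrC b a); ring.
Qed.
Lemma NC23 a b c : N a b c = N a c b.
Proof.
rewrite /N.
have -> : a + b - c = a - c + b by ring.
have -> : a - b + c = a + c - b by ring.
have -> : a + b + c = a + c + b by ring.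
have -> : a - b - c = a - c - b by ring.
ring.
Qed.
Lemma NS1 s a b c : N (sgr s * a) b c = N a b c.
Proof. by case: s; rewrite /sgr ?mulN1r ?NN1 ?mul1r. Qed.
Lemma NS2 s a b c : N a (sgr s * b) c = N a b c.
Proof. by rewrite NC12 NS1 NC12. Qed.
Lemma NS3 s a b c : N a b (sgr s * c) = N a b c.
Proof. by rewrite NC23 NS2 NC23. Qed.

Lemma N_perm (f : 'I_3 -> 'I_3) (b : 'I_3 -> bool) (x y : 'I_3 -> R) :
  injective f -> (forall j, y (f j) = sgr (b j) * x j) ->
  N (y 0) (y 1) (y 2) = N (x 0) (x 1) (x 2).
Proof.
move=> inj hy.
have h3 : forall j : 'I_3, j = 0 \/ j = 1 \/ j = 2.
  move=> [[|[|[|n]]] hn]; [left|right;left|right;right|by []]; exact: val_inj.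
have y0 := hy 0; have y1 := hy 1; have y2 := hy 2.
have d01 : f 0 <> f 1 by move/inj.
have d02 : f 0 <> f 2 by move/inj.
have d12 : f 1 <> f 2 by move/inj.
case: (h3 (f 0)) => [e0|[e0|e0]]; case: (h3 (f 1)) => [e1|[e1|e1]];
  case: (h3 (f 2)) => [e2|[e2|e2]];
  rewrite ?e0 ?e1 ?e2 in y0 y1 y2 d01 d02 d12 => //;
  rewrite y0 y1 y2 !NS1 !NS2 !NS3;
  first [done | by rewrite NC12 | by rewrite NC23 | by rewrite NC12 NC23
        | by rewrite NC23 NC12 | by rewrite NC12 NC23 NC12].
Qed.
Lemma sum_lin (s : seq (R * 'M[R[i]]_2)) (F0 F1 F2 F3 : 'M[R[i]]_2 -> R) q p :
  \sum_(x <- s) x.1 * lin (F0 x.2) (F1 x.2) (F2 x.2) (F3 x.2) q p =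
  lin (\sum_(x <- s) x.1 * F0 x.2) (\sum_(x <- s) x.1 * F1 x.2)
      (\sum_(x <- s) x.1 * F2 x.2) (\sum_(x <- s) x.1 * F3 x.2) q p.
Proof.
elim: s => [|x s IH]; rewrite ?big_nil ?big_cons ?IH /lin; ring.
Qed.

Definition Dc P M (s : seq (R * 'M[R[i]]_2)) :=
  cf P M - \sum_(x <- s) x.1 * cf P x.2.

Lemma dist_formula M s (f : bool * bool -> R) :
  (forall a, f a = \sum_(x <- s) x.1 * wigner1 x.2 a) ->
  l1dist (wigner1 M) f = \sum_(a : bool*bool)
   `|lin (Dc PI M s) (Dc (pau 0) M s) (Dc (pau 1) M s) (Dc (pau 2) M s) a.1 a.2|.
Proof.
move=> hf; rewrite /l1dist; apply: eq_bigr => -[q p] _ /=.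
rewrite hf; under eq_bigr do rewrite wigner_c.
rewrite wigner_c sum_lin /lin /Dc; congr `|_|; ring.
Qed.

Ltac cplx H := let h1 := fresh in let h2 := fresh in
  move: (congr1 (@complex.Re _) H) (congr1 (@complex.Im _) H) => h1 h2;
  rewrite ?mulN1r ?mul1r ?mulr1 ?mulr0 ?opprK ?oppr0 in h1 h2;
  rewrite ?ReN ?ImN ?Re1 ?Im1 ?Re0 ?Im0 /iC /= in h1 h2; clear - h1 h2; lra.

Lemma pau_ne j1 j2 b : pau j1 = sgnb b *: pau j2 -> j1 = j2.
Proof.
case: j1 => [[|[|[|n1]]] h1] //; case: j2 => [[|[|[|n2]]] h2] //;
  move=> H; try exact: val_inj; exfalso; move/matrixP: H => H;
  have H00 := H 0 0; have H01 := H 0 1; have H11 := H 1 1;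
  rewrite /pau /= !mxE /= in H00 H01 H11; clear H; case: b H00 H01 H11 => /= H00 H01 H11;
  first [cplx H00 | cplx H01 | cplx H11].
Qed.
Lemma pau_sq j : pau j *m pau j = 1%:M.
Proof.
case: j => [[|[|[|n]]] h] //; apply/matrixP => a c; rewrite /pau !mxE !big_ord_recl !big_ord0 !mxE;
  case: a => [[|[|a]] ha] //; case: c => [[|[|c]] hc] //=;
  rewrite ?mul0r ?mulr0 ?mul1r ?mulr1 ?add0r ?addr0 ?mulrN ?mulNr ?opprK ?iC2 ?mulrNN ?mulr1 ?opprK //.
Qed.

Lemma tr_pau j : \tr (pau j) = 0.
Proof.
case: j => [[|[|[|n]]] h] //; rewrite /pau /mxtrace !big_ord_recl !big_ord0 !mxE /= ?addr0 ?subrr //.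
Qed.

Lemma pau_neI j b : pau j <> sgnb b *: PI.
Proof.
case: j => [[|[|[|n1]]] h1] //;
  move=> H; move/matrixP: H => H;
  have H00 := H 0 0; have H01 := H 0 1; have H11 := H 1 1;
  rewrite /pau /PI /= !mxE /= in H00 H01 H11; clear H; case: b H00 H01 H11 => /= H00 H01 H11;
  first [cplx H00 | cplx H01 | cplx H11].
Qed.
Definition cj U M := U *m M *m dagger U.

Section Conj.
Variable U : 'M[R[i]]_2.
Hypothesis hu : dagger U *m U = 1%:M.
Hypothesis hu' : U *m dagger U = 1%:M.

Lemma cjM A B : cj U (A *m B) = cj U A *m cj U B.
Proof. by rewrite /cj !mulmxA -[U *m A *m dagger U *m U]mulmxA hu mulmx1. Qed.
Lemma cj1 : cj U 1%:M = 1%:M.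
Proof. by rewrite /cj mulmx1 hu'. Qed.
Lemma cjK A : cj (dagger U) (cj U A) = A.
Proof. by rewrite /cj daggerK !mulmxA hu mul1mx -mulmxA hu mulmx1. Qed.
Lemma cjK' A : cj U (cj (dagger U) A) = A.
Proof. by rewrite /cj daggerK !mulmxA hu' mul1mx -mulmxA hu' mulmx1. Qed.
Lemma cj_inj : injective (cj U).
Proof. by move=> A B e; rewrite -(cjK A) e cjK. Qed.
Lemma cjN A : cj U (- A) = - cj U A.
Proof. by rewrite /cj mulmxN mulNmx. Qed.
Lemma cjZ a A : cj U (a *: A) = a *: cj U A.
Proof. by rewrite /cj -scalemxAr -scalemxAl. Qed.
Lemma tr_cj A : \tr (cj U A) = \tr A.
Proof. by rewrite /cj mxtrace_mulC mulmxA hu mul1mx. Qed.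
Lemma cf_cj P M : cf (cj U P) (cj U M) = cf P M.
Proof. by rewrite /cf -cjM tr_cj. Qed.
End Conj.
Lemma pauli_pau (j : 'I_3) : @pauli_group R (pau j).
Proof.
exists ord0, (pau j); split; last by rewrite expr0 scale1r.
by case: j => [[|[|[|n]]] h] //; rewrite /pau /=; auto.
Qed.

Lemma pauli_neg (P : 'M[R[i]]_2) : pauli_group P -> pauli_group (- P).
Proof.
move=> [[[|[|[|[|k]]]] hk] [Q [hQ ->]]] //.
- exists (@Ordinal 4 2 isT), Q; split => //. by rewrite expr0 expr2 iC2 scaleN1r scale1r.
- exists (@Ordinal 4 3 isT), Q; split => //.
  by rewrite expr1 !exprS expr0 mulr1 iC2 mulrN1 scaleNr.
- exists (@Ordinal 4 0 isT), Q; split => //. by rewrite expr0 expr2 iC2 scaleN1r scale1r opprK.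
- exists (@Ordinal 4 1 isT), Q; split => //.
  by rewrite expr1 !exprS expr0 mulr1 iC2 mulrN1 scaleNr opprK.
Qed.


Lemma cliff_struct U : clifford1 U ->
  forall j, exists j', exists b, cj U (pau j) = sgnb b *: pau j'.
Proof.
move=> [hu' [hu hn]] j.
have [k [Q [hQ e]]] := hn _ (pauli_pau j).
change (U *m pau j *m dagger U) with (cj U (pau j)) in e.
have sq : cj U (pau j) *m cj U (pau j) = 1%:M by rewrite -cjM // pau_sq cj1.
have QQ : Q *m Q = 1%:M.
  by case: hQ => [->|[->|[->|->]]]; [rewrite /PI mulmx1 | exact: (pau_sq 0) | exact: (pau_sq 1) | exact: (pau_sq 2)].
rewrite e -scalemxAl -scalemxAr scalerA QQ in sq.
have sk : (iC : R[i]) ^+ k * iC ^+ k = 1.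
  by move/matrixP/(_ 0 0): sq; rewrite !mxE /= mulr1.
clear sq.
have [b eb] : exists b, cj U (pau j) = sgnb b *: Q.
  move: k e sk => [[|[|[|[|k]]]] hk] e sk //.
  - by exists false; rewrite e expr0.
  - by exfalso; rewrite expr1 iC2 in sk; cplx sk.
  - by exists true; rewrite e expr2 iC2.
  - by exfalso; rewrite !exprS expr0 mulr1 iC2 mulrN1 mulrNN iC2 in sk; cplx sk.
case: hQ => [eQ|[eQ|[eQ|eQ]]]; rewrite eQ in eb.
- exfalso; apply: (@pau_neI j b).
  have hd : dagger U *m dagger (dagger U) = 1%:M by rewrite daggerK.
  by rewrite -(cjK U hu (pau j)) eb cjZ /PI (cj1 (dagger U) hd).
- by exists 0, b.
- by exists 1, b.
- by exists 2, b.
Qed.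
Lemma cliff_fun U : clifford1 U ->
  exists f : 'I_3 -> 'I_3, exists b : 'I_3 -> bool,
    injective f /\ forall j, cj U (pau j) = sgnb (b j) *: pau (f j).
Proof.
move=> hU; have [hu' [hu _]] := hU.
have [f hf] := fin_all_exists (cliff_struct U hU).
have [b hb] := fin_all_exists hf.
exists f, b; split => // j1 j2 e.
have e1 := hb j1; have e2 := hb j2; rewrite e in e1.
have e1' : pau j1 = sgnb (b j1) *: cj (dagger U) (pau (f j2)) by rewrite -cjZ -e1 cjK.
have e2' : pau j2 = sgnb (b j2) *: cj (dagger U) (pau (f j2)) by rewrite -cjZ -e2 cjK.
apply: (@pau_ne _ _ (addb (b j1) (b j2))).
rewrite e1' e2' scalerA; congr (_ *: _).
by case: (b j1); case: (b j2) => /=; rewrite ?mulN1r ?opprK ?mul1r ?mulr1.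
Qed.

Lemma cf_rel U j j' b M : dagger U *m U = 1%:M ->
  cj U (pau j) = sgnb b *: pau j' -> cf (pau j') (cj U M) = sgr b * cf (pau j) M.
Proof.
move=> hu e; rewrite -(cf_cj U hu (pau j) M) e /cf -scalemxAr mxtraceZ gS.
by clear e; case: b; rewrite /sgr; ring.
Qed.

Lemma tr_stab (s : 'M[R[i]]_2) : stab1 s -> \tr s = 1.
Proof.
move=> [S [psi [_ _ _ _ [npsi _ _ ->]]]].
by rewrite mxtrace_mulC npsi mxtrace1.
Qed.

Lemma stab_conj U (s : 'M[R[i]]_2) : clifford1 U -> stab1 s -> stab1 (cj U s).
Proof.
move=> [hu' [hu hn]] [S [psi [[uS szS pS] [oneS mulS] comS negS [npsi fixpsi uniqpsi es]]]].
exists (map (cj U) S), (U *m psi); split.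
- split; first by rewrite (map_inj_uniq (cj_inj U hu)).
  + by rewrite size_map.
  + by move=> P /mapP [P0 h0 ->]; apply: hn; apply: pS.
- split; first by apply/mapP; exists 1%:M => //; rewrite cj1.
  move=> P Q /mapP [P0 h0 ->] /mapP [Q0 h1 ->]; rewrite -cjM //; apply: map_f; exact: mulS.
- by move=> P Q /mapP [P0 h0 ->] /mapP [Q0 h1 ->]; rewrite -!cjM // comS.
- apply/mapP => -[P0 h0 e].
  have eP : P0 = - 1%:M by apply: (cj_inj U hu); rewrite -e cjN cj1.
  by move: negS; rewrite -eP h0.
- split.
  + by rewrite dagger_mul mulmxA -(mulmxA (dagger psi)) hu mulmx1 npsi.
  + by move=> P /mapP [P0 h0 ->]; rewrite /cj -!mulmxA (mulmxA (dagger U)) hu mul1mx fixpsi.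
  + move=> phi hphi.
    have H : forall P, P \in S -> P *m (dagger U *m phi) = dagger U *m phi.
      move=> P hP; have := hphi _ (map_f (cj U) hP); rewrite /cj => e.
      by rewrite -{2}e !mulmxA hu mul1mx.
    have [c hc] := uniqpsi _ H.
    by exists c; rewrite scalemxAr -hc mulmxA hu' mul1mx.
  + by rewrite es /cj dagger_mul !mulmxA.
Qed.
Lemma pau_cases (j : 'I_3) : pau j = PX \/ pau j = PY \/ pau j = PZ.
Proof. by case: j => [[|[|[|n]]] h] //; rewrite /pau /=; auto. Qed.

Lemma pauli_kpau (k : 'I_4) j : @pauli_group R (iC ^+ k *: pau j).
Proof. exists k, (pau j); split => //; right; exact: pau_cases. Qed.

Lemma dag_struct U : clifford1 U ->
  forall j', exists j, exists b, cj (dagger U) (pau j') = sgnb b *: pau j.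
Proof.
move=> hU; have [hu' [hu _]] := hU.
have [f [b [inj hb]]] := cliff_fun U hU.
have [g fg gf] := injF_bij inj.
move=> j'; exists (g j'), (b (g j')).
have e := hb (g j'); rewrite gf in e.
have : pau (g j') = sgnb (b (g j')) *: cj (dagger U) (pau j') by rewrite -cjZ -e cjK.
move=> ->; rewrite scalerA.
by case: (b (g j')) => /=; rewrite ?mulN1r ?opprK ?mul1r ?scale1r.
Qed.

Lemma cliff_dagger U : clifford1 U -> clifford1 (dagger U).
Proof.
move=> hU; have [hu' [hu hn]] := hU.
have hd : dagger U *m dagger (dagger U) = 1%:M by rewrite daggerK.
split => //; split; first by rewrite daggerK.
move=> P [k [Q [hQ ->]]].
change (pauli_group (cj (dagger U) (iC ^+ k *: Q))); rewrite cjZ.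
case: hQ => [->|hQ].
  by rewrite /PI (cj1 (dagger U) hd); exists k, PI; split => //; left.
have [j' ->] : exists j', Q = pau j'.
  by case: hQ => [->|[->|->]]; [exists 0 | exists 1 | exists 2].
have [j [b ->]] := dag_struct U hU j'.
case: b => /=; last by rewrite scale1r; apply: pauli_kpau.
rewrite scaleN1r scalerN; apply: pauli_neg; apply: pauli_kpau.
Qed.
Lemma DI (M : 'M[R[i]]_2) (t : seq (R * 'M[R[i]]_2)) : \tr M = 1 ->
  (forall x, x \in t -> stab1 x.2) -> \sum_(x <- t) x.1 = 1 -> Dc PI M t = 0.
Proof.
move=> htr hst hsum; rewrite /Dc.
rewrite (eq_big_seq (fun x => x.1 * g 1)); last first.
  by move=> x hx; rewrite /cf /PI mulmx1 tr_stab //; exact: hst.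
by rewrite -mulr_suml hsum mul1r /cf /PI mulmx1 htr subrr.
Qed.

Local Open Scope classical_set_scope.

Lemma incl U M : clifford1 U -> \tr M = 1 ->
  [set d : R | exists f, free_wigner1 f /\ d = l1dist (wigner1 M) f] `<=`
  [set d : R | exists f, free_wigner1 f /\ d = l1dist (wigner1 (cj U M)) f].
Proof.
move=> hU htr d [f [[s [hs hsum hf]] ->]].
have [hu' [hu hn]] := hU.
set s' := map (fun x => (x.1, cj U x.2)) s.
have hs' : forall x, x \in s' -> 0 <= x.1 /\ stab1 x.2.
  move=> x /mapP [y hy ->] /=; have [h1 h2] := hs _ hy; split => //; exact: stab_conj.
have hsum' : \sum_(x <- s') x.1 = 1 by rewrite big_map.
exists (fun a => \sum_(x <- s') x.1 * wigner1 x.2 a); split.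
  by exists s'; split.
rewrite (dist_formula _ _ _ hf) (dist_formula (cj U M) s' _ (fun a => erefl)).
rewrite DI //; last by move=> x /hs [].
rewrite DI //; last by move=> x /hs' [].
  2: by rewrite tr_cj.
rewrite !Nsum.
have [fp [b [inj hb]]] := cliff_fun U hU.
symmetry.
apply: (@N_perm fp b (fun j => Dc (pau j) M s) (fun j => Dc (pau j) (cj U M) s') inj).
move=> j /=; rewrite /Dc big_map /= (cf_rel _ _ _ _ _ hu (hb j)) mulrBr mulr_sumr.
congr (_ - _); apply: eq_bigr => x _; rewrite (cf_rel _ _ _ _ _ hu (hb j)); ring.
Qed.
End S.

Theorem theorem3p1 (R : realType) (rho U : 'M[R[i]]_2) :
  density1 rho -> clifford1 U ->
  wigner_distance1 (U *m rho *m dagger U) = wigner_distance1 rho.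
Proof.
move=> [_ [_ htr]] hU; have [hu' [hu _]] := hU.
rewrite /wigner_distance1; congr reals.inf.
rewrite eqEsubset; split.
- have := @incl R (dagger U) (U *m rho *m dagger U) (@cliff_dagger R U hU).
  rewrite (@cjK R U hu rho) (@tr_cj R U hu rho) htr; apply => //.
- exact: (@incl R U rho hU htr).
Qed.
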